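(* Let $A\in\mathbb{R}^{n\times n}$, $B\in\mathbb{R}^{n\times m}$, $N\geq 1$ an integer, $\Omega=\{x\in\mathbb{R}^n: Hx\leq h\}$ with $H\in\mathbb{R}^{n_h\times n}$, $h\in\mathbb{R}^{n_h}$, and $U=\{v\in\mathbb{R}^m: Gv\leq g\}$ with $G\in\mathbb{R}^{n_g\times m}$, $g\in\mathbb{R}^{n_g}$. Suppose $0\in\Omega$ and $0\in U$. For $k\geq 1$ let $$Q_k(\Omega,U)=\Big\{x\in\mathbb{R}^n:\ \exists\, u_1,\dots,u_k\in U \text{ with } A^k x+\sum_{i=0}^{k-1}A^{k-1-i}Bu_{k-i}\in\Omega\Big\},$$ and $\bar{Q}_N(\Omega,U)=\mathrm{co}\big(\bigcup_{k=1}^N Q_k(\Omega,U)\big)$. Set $\bar{n}=n+Nm$, $n_{\bar g}=n_h+Nn_g$ and $$\bar{G}=\begin{bmatrix} HA^N & HB & HAB & \cdots & HA^{N-1}B\\ 0 & G & 0 & \cdots & 0\\ 0 & 0 & G & \cdots & 0\\ \vdots & & & \ddots & \vdots\\ 0 & 0 & 0 & \cdots & G\end{bmatrix}\in\mathbb{R}^{n_{\bar g}\times\bar n},\quad \bar g=\begin{bmatrix}h\\ g\\ \vdots\\ g\end{bmatrix}\in\mathbb{R}^{n_{\bar g}},\quad \bar H=\begin{bmatrix}H & 0 & \cdots & 0\end{bmatrix}\in\mathbb{R}^{n_h\times\bar n}$$ (with $g$ repeated $N$ times in $\bar g$). If there exist a nonnegative (entrywise) matrix $T\in\mathbb{R}^{n_{\bar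 g}\times n_h}$ and a matrix $M\in\mathbb{R}^{\bar n\times\bar n}$ such that $$T\bar H=\bar G M,\qquad Th\leq \bar g,\qquad \begin{bmatrix}I & 0 & \cdots & 0\end{bmatrix}=\begin{bmatrix}I & 0&\cdots & 0\end{bmatrix}M$$ (where $\begin{bmatrix}I & 0 & \cdots & 0\end{bmatrix}\in\mathbb{R}^{n\times\bar n}$ with $I$ the $n\times n$ identity), then $\bar{Q}_N(\Omega,U)$ is a control invariant set for the system $x^+=Ax+Bu$ with input set $U$.
   Context: A set $C\subseteq\mathbb{R}^n$ is control invariant for $x^+=Ax+Bu$ with input constraint $u\in U$ if for every $x\in C$ there exists $u\in U$ with $Ax+Bu\in C$. Vector inequalities are componentwise; $\mathrm{co}$ denotes convex hull. *)

(* Defs.v *)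
From mathcomp Require Import all_boot all_order all_algebra.
Set Implicit Arguments. Unset Strict Implicit. Unset Printing Implicit Defensive.
Import Order.TTheory GRing.Theory Num.Theory.
Local Open Scope ring_scope.

Section Defs.
Variable R : realFieldType.

Definition vle (p : nat) (x y : 'cV[R]_p) : Prop := forall i, x i 0 <= y i 0.

Definition mx_nonneg (p q : nat) (T : 'M[R]_(p, q)) : Prop := forall i j, 0 <= T i j.

Definition polyh (n p : nat) (H : 'M[R]_(p, n)) (h : 'cV[R]_p) (x : 'cV[R]_n) : Prop :=
  vle (H *m x) h.

Definition conv (n : nat) (S : 'cV[R]_n -> Prop) (x : 'cV[R]_n) : Prop :=
  exists (k : nat) (l : 'I_k -> R) (p : 'I_k -> 'cV[R]_n),
    (forall i, 0 <= l i) /\ \sum_(i < k) l i = 1 /\ (forall i, S (p i)) /\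
    x = \sum_(i < k) l i *: p i.

Definition control_invariant (n m : nat) (A : 'M[R]_n) (B : 'M[R]_(n, m))
    (U : 'cV[R]_m -> Prop) (C : 'cV[R]_n -> Prop) : Prop :=
  forall x, C x -> exists u, U u /\ C (A *m x + B *m u).

(* Q_k(Omega,U): u_1..u_k encoded as u : nat -> 'cV_m, used at indices 1..k *)
Definition Qk (n m : nat) (A : 'M[R]_n) (B : 'M[R]_(n, m))
    (Omega : 'cV[R]_n -> Prop) (U : 'cV[R]_m -> Prop) (k : nat) (x : 'cV[R]_n) : Prop :=
  exists u : nat -> 'cV[R]_m,
    (forall i, (1 <= i <= k)%N -> U (u i)) /\
    Omega (A ^+ k *m x + \sum_(i < k) (A ^+ (k - 1 - i) *m B *m u (k - i)%N)).

Definition Qbar (n m : nat) (A : 'M[R]_n) (B : 'M[R]_(n, m))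
    (Omega : 'cV[R]_n -> Prop) (U : 'cV[R]_m -> Prop) (N : nat) : 'cV[R]_n -> Prop :=
  conv (fun x => exists k, (1 <= k <= N)%N /\ Qk A B Omega U k x).

End Defs.

Lemma sum_const_nat (N m : nat) : (\sum_(i < N) m = N * m)%N.
Proof. by rewrite sum_nat_const card_ord. Qed.

Section Blocks.
Variable R : realFieldType.
Variables (n m nh ng N : nat).
Variables (A : 'M[R]_n) (B : 'M[R]_(n, m)) (H : 'M[R]_(nh, n)) (h : 'cV[R]_nh)
          (G : 'M[R]_(ng, m)) (g : 'cV[R]_ng).

Definition Gbar : 'M[R]_(nh + N * ng, n + N * m) :=
  col_mx
    (row_mx (H *m A ^+ N)
       (castmx (erefl nh, sum_const_nat N m) (\mxrow_(i < N) (H *m A ^+ i *m B))))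
    (row_mx 0
       (castmx (sum_const_nat N ng, sum_const_nat N m) (@mxblock R N N (fun _ => ng) (fun _ => m)
          (fun i j => if i == j then G else 0)))).

Definition gbar : 'cV[R]_(nh + N * ng) :=
  col_mx h (castmx (sum_const_nat N ng, erefl 1%N) (\mxcol_(i < N) g)).

Definition Hbar : 'M[R]_(nh, n + N * m) := row_mx H 0.

Definition Ibar : 'M[R]_(n, n + N * m) := row_mx 1%:M 0.
End Blocks.

(* Main.v *)
Require Import Defs.
From mathcomp Require Import all_boot all_order all_algebra zify.
From Stdlib Require Import ClassicalEpsilon.
Import Order.TTheory GRing.Theory Num.Theory.
Local Open Scope ring_scope.
Set Implicit Arguments. Unset Strict Implicit.
Lemma castmx_mul (R : realFieldType) p p' q q' r (e1 : p = p') (e2 : q = q')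
  (X : 'M[R]_(p,q)) (Y : 'M[R]_(q,r)) :
  castmx (e1,e2) X *m castmx (e2, erefl r) Y = castmx (e1, erefl r) (X *m Y).
Proof. by case: p' / e1; case: q' / e2; rewrite !castmx_id. Qed.

Lemma vle_cast (R : realFieldType) p p' (e : p = p') (X Y : 'cV[R]_p) :
  vle (castmx (e, erefl 1%N) X) (castmx (e, erefl 1%N) Y) -> vle X Y.
Proof. by case: p' / e; rewrite !castmx_id. Qed.

Lemma vle_colu (R : realFieldType) p q (a c : 'cV[R]_p) (b d : 'cV[R]_q) :
  vle (col_mx a b) (col_mx c d) -> vle a c /\ vle b d.
Proof.
move=> H; split => i.
  by have := H (lshift q i); rewrite !col_mxEu.
by have := H (rshift p i); rewrite !col_mxEd.
Qed.

Lemma vle_submxcol (R : realFieldType) N (p_ : 'I_N -> nat) (X Y : 'cV[R]_(\sum_i p_ i)) i :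
  vle X Y -> vle (submxcol X i) (submxcol Y i).
Proof. by move=> H r; rewrite !mxE; apply: H. Qed.

Lemma vle_mulT (R : realFieldType) p q (T : 'M[R]_(p,q)) (a b : 'cV[R]_q) :
  mx_nonneg T -> vle a b -> vle (T *m a) (T *m b).
Proof.
move=> HT Hab i; rewrite !mxE; apply: ler_sum => j _.
by apply: ler_wpM2l; [apply: HT | apply: Hab].
Qed.

Lemma vle_trans (R : realFieldType) p (a b c : 'cV[R]_p) : vle a b -> vle b c -> vle a c.
Proof. by move=> H1 H2 i; apply: le_trans (H1 i) (H2 i). Qed.
Lemma OmegaQN (R : realFieldType) (n m nh ng N : nat)
    (A : 'M[R]_n) (B : 'M[R]_(n, m))
    (H : 'M[R]_(nh, n)) (h : 'cV[R]_nh) (G : 'M[R]_(ng, m)) (g : 'cV[R]_ng)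
    (T : 'M[R]_(nh + N.+1 * ng, nh)) (M : 'M[R]_(n + N.+1 * m)) :
  mx_nonneg T ->
  T *m Hbar m N.+1 H = Gbar N.+1 A B H G *m M ->
  vle (T *m h) (gbar N.+1 h g) ->
  Ibar R n m N.+1 = Ibar R n m N.+1 *m M ->
  forall x, polyh H h x -> Qk A B (polyh H h) (polyh G g) N.+1 x.
Proof.
move=> HT HTM Th HI x Hx.
set z := M *m col_mx x 0.
have Ez : z = col_mx (usubmx z) (dsubmx z) by rewrite vsubmxK.
have Hu : usubmx z = x.
  have := congr1 (fun X => X *m col_mx x (0 : 'cV_(N.+1 * m))) HI.
  rewrite -mulmxA -/z {1}Ez /Ibar !mul_row_col !mul0mx !addr0 !mul1mx => ->//.
have HG : vle (Gbar N.+1 A B H G *m z) (gbar N.+1 h g).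
  rewrite /z mulmxA -HTM -mulmxA /Hbar mul_row_col mul0mx addr0.

  exact: (vle_trans (vle_mulT HT Hx) Th).
move: HG; rewrite Ez Hu /Gbar /gbar mul_col_mx !mul_row_col mul0mx add0r.
move=> /vle_colu [Htop Hbot].
set w := dsubmx z in Htop Hbot.
set W := castmx (esym (sum_const_nat N.+1 m), erefl 1%N) w.
have Ew : w = castmx (sum_const_nat N.+1 m, erefl 1%N) W by rewrite /W castmxKV.
rewrite Ew !castmx_mul in Htop Hbot.
rewrite castmx_id in Htop.
move/vle_cast: Hbot.
rewrite -[W]submxcolK mul_mxblock_mxrow => Hbot. move: Htop. rewrite -[W]submxcolK mul_mxrow_mxcol => Htop.
exists (fun k => submxcol W (inord k.-1)); split.
  move=> k /andP [k1 kN] r.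
  have := vle_submxcol (i:=inord k.-1) Hbot r.
  rewrite !mxcolK (bigD1 (inord k.-1)) //= eqxx big1 ?addr0 //.
  by move=> j /negbTE; rewrite eq_sym => ->; rewrite mul0mx.
suff E : H *m (A ^+ N.+1 *m x + \sum_(i < N.+1) (A ^+ (N.+1 - 1 - i) *m B *m submxcol W (inord (N.+1 - i).-1)))
   = H *m A ^+ N.+1 *m x + \sum_(i < N.+1) H *m A ^+ i *m B *m submxcol W i.
  by move=> r; rewrite /polyh E; apply: Htop.
rewrite mulmxDr mulmxA mulmx_sumr.
congr (_ + _).
rewrite (reindex_inj rev_ord_inj) /=.
apply: eq_bigr => i _.
have -> : (N.+1 - 1 - rev_ord i = i)%N by rewrite /=; case: i => /= i Hi; lia.
have -> : ((N.+1 - rev_ord i).-1 = i)%N by rewrite /=; case: i => /= i Hi; lia.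
by rewrite inord_val !mulmxA.
Qed.
Lemma Qk_step (R : realFieldType) (n m : nat) (A : 'M[R]_n) (B : 'M[R]_(n, m))
    Omega U k x :
  Qk A B Omega U k.+2 x -> exists u, U u /\ Qk A B Omega U k.+1 (A *m x + B *m u).
Proof.
move=> [u [Hu HO]]; exists (u k.+2); split; first by apply: Hu; rewrite leqnn.
exists u; split; first by move=> i /andP [i1 ik]; apply: Hu; rewrite i1 /=; lia.
move: HO; rewrite big_ord_recl.
have -> : (k.+2 - 1 - 0 = k.+1)%N by lia.
rewrite subn0 mulmxDr addrA mulmxA [A ^+ k.+2]exprSr -mulmxE.
rewrite [_ *m (B *m _)]mulmxA.
congr (Omega (_ + _)).
apply: eq_bigr => i _; rewrite /bump /=.
by have -> : (k.+2 - 1 - i.+1 = k.+1 - 1 - i)%N by lia.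
Qed.

Lemma Q1_step (R : realFieldType) (n m : nat) (A : 'M[R]_n) (B : 'M[R]_(n, m))
    Omega U x :
  Qk A B Omega U 1 x -> exists u, U u /\ Omega (A *m x + B *m u).
Proof.
move=> [u [Hu HO]]; exists (u 1%N); split; first by apply: Hu.
by move: HO; rewrite big_ord1 expr1 /= expr0 mul1mx.
Qed.
Unset Implicit Arguments.
Theorem theorem1 (R : realFieldType) (n m nh ng N : nat)
    (A : 'M[R]_n) (B : 'M[R]_(n, m))
    (H : 'M[R]_(nh, n)) (h : 'cV[R]_nh) (G : 'M[R]_(ng, m)) (g : 'cV[R]_ng) :
  (1 <= N)%N ->
  polyh H h 0 ->
  polyh G g 0 ->
  (exists (T : 'M[R]_(nh + N * ng, nh)) (M : 'M[R]_(n + N * m)),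
      mx_nonneg T /\
      T *m Hbar m N H = Gbar N A B H G *m M /\
      vle (T *m h) (gbar N h g) /\
      Ibar R n m N = Ibar R n m N *m M) ->
  control_invariant A B (polyh G g) (Qbar A B (polyh H h) (polyh G g) N).
Proof.
case: N => [//|N] _ _ _ [T [M [HT [HTM [Th HI]]]]].
have HOQ := OmegaQN HT HTM Th HI.
set S := (fun x => exists k, (1 <= k <= N.+1)%N /\ Qk A B (polyh H h) (polyh G g) k x).
have Sstep : forall x, S x -> exists u, polyh G g u /\ S (A *m x + B *m u).
  move=> x [k [/andP [k1 kN] Hq]].
  case: k k1 kN Hq => [//|[|k]] _ kN Hq.
    have [u [Hu Ho]] := Q1_step Hq.
    by exists u; split => //; exists N.+1; rewrite leqnn; split => //; apply: HOQ.
  have [u [Hu Hq']] := Qk_step Hq.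
  by exists u; split => //; exists k.+1; split => //; lia.
move=> x [k [l [p [Hl [Hs [Hp ->]]]]]].
have Hc : forall i, {u | polyh G g u /\ S (A *m p i + B *m u)}.
  by move=> i; apply: constructive_indefinite_description; apply: Sstep.
exists (\sum_(i < k) l i *: sval (Hc i)); split.
  move=> r; rewrite mulmx_sumr summxE.
  apply: le_trans (_ : \sum_(i < k) l i * g r 0 <= _).
    apply: ler_sum => i _; rewrite -scalemxAr mxE; apply: ler_wpM2l => //.
    by case: (svalP (Hc i)) => Hu _; apply: Hu.
  by rewrite -big_distrl /= Hs mul1r.
exists k, l, (fun i => A *m p i + B *m sval (Hc i)); split => //; split => //; split.
  by move=> i; case: (svalP (Hc i)).
rewrite mulmx_sumr mulmx_sumr -big_split /=.
by apply: eq_bigr => i _; rewrite scalerDr !scalemxAr.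
Qed.
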